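(* Let $K$ and $K'$ be two non-degenerate CMIs, with $\mathrm{can}(\mathrm{pur}(K))=(C,\langle\mathbb I_K,\mathbb I_K,P_i,1\le i\le t\rangle)$ and $\mathrm{can}(\mathrm{pur}(K'))=(C',\langle\mathbb I_{K'},\mathbb I_{K'},P'_j,1\le j\le s\rangle)$. (1) If $R_K^{K'}=(\cdot,\langle\ \rangle)$, then $K$ implies $K'$ if and only if $C\subseteq C'$. (2) If $R_K^{K'}\ne(\cdot,\langle\ \rangle)$, then $K$ implies $K'$ if and only if $K$ implies $R_K^{K'}$.
   Context: Setting: $X_1,\dots,X_n$ jointly distributed discrete random variables with $H(X_i)<\infty$; distribution unspecified. $X_\alpha=(X_i,i\in\alpha)$, $X_\emptyset$ constant. A CMI is $K=(C,\langle Q_1,\dots,Q_k\rangle)$, $k\ge0$, $C\subseteq\{1,\dots,n\}$, $\langle\cdot\rangle$ an unordered multiset of subsets; valid (for a given distribution) if $\sum_iH(X_{Q_i}|X_C)-H(X_{Q_1},\dots,X_{Q_k}|X_C)=0$. Empty members may be deleted. Degenerate = valid for every distribution, written $(\cdot,\langle\ \rangle)$. ''$K$ implies $K'$'': for every joint distribution, if $K$ is valid then $K'$ is valid. $\mathrm{pur}(K)=(C,\langle Q_i\setminus C:Q_i\setminus C\ne\emptyset\rangle)$. For pure $K$: $\mathbb I_K$ = indices lying in at least two members of the collection if $k\ge2$, else $\emptyset$; $P_1,\dots,P_t$ the nonempty sets among $Q_i\setminus\mathbb I_K$; $\mathrm{can}(K)=(\cdot,\langle\ \rangle)$ if $k\le1$,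 $(C,\langle\mathbb I_K,\mathbb I_K\rangle)$ if $k\ge2,\mathbb I_K\ne\emptyset,t\le1$, $(C,\langle P_1..P_t\rangle)$ if $k\ge2,\mathbb I_K=\emptyset$, $(C,\langle\mathbb I_K,\mathbb I_K,P_1..P_t\rangle)$ if $k\ge2,\mathbb I_K\ne\emptyset,t\ge2$. For general $K$, $\mathbb I_K$ is the repeated-index set of $\mathrm{pur}(K)$; general-form notation omits copies of $\mathbb I_K$ when empty and uses $t=0$ for $(C,\langle\mathbb I_K,\mathbb I_K\rangle)$. $R_K^{K'}$: with $D=\mathbb I_{K'}\setminus\mathbb I_K$ and $T_1,\dots,T_u$ the nonempty sets among $P'_j\setminus\mathbb I_K$: $R_K^{K'}=(\cdot,\langle\ \rangle)$ if $D=\emptyset,u\le1$; $(C'\setminus\mathbb I_K,\langle T_1..T_u\rangle)$ if $D=\emptyset,u\ge2$; $(C'\setminus\mathbb I_K,\langle D,D\rangle)$ if $D\ne\emptyset,u\le1$; $(C'\setminus\mathbb I_K,\langle D,D,T_1..T_u\rangle)$ if $D\ne\emptyset,u\ge2$. *)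

(* Defs.v *)
From Stdlib Require Import Reals.
From Coquelicot Require Import Coquelicot.
From mathcomp Require Import all_boot.

Set Implicit Arguments.
Unset Strict Implicit.
Unset Printing Implicit Defensive.
Local Open Scope nat_scope.

(* A joint distribution is given by a countable (discrete) probability
   space on nat with pmf q, and random variables X i : nat -> nat
   (every countable alphabet embeds in nat).                            *)

Definition is_pmf (q : nat -> R) : Prop :=
  (forall w, Rle R0 (q w)) /\ is_series q R1.

Section Entropy.
Variable n : nat.
Variable q : nat -> R.
Variable X : 'I_n -> nat -> nat.

Definition sameval (A : {set 'I_n}) (w w' : nat) : bool :=
  [forall i in A, X i w == X i w'].

Definition marg (A : {set 'I_n}) (w : nat) : R :=
  Series (fun w' => if sameval A w w' then q w' else R0).

Definition ent_term (A : {set 'I_n}) (w : nat) : R :=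
  Rmult (q w) (Ropp (ln (marg A w))).

Definition entropy (A : {set 'I_n}) : R := Series (ent_term A).

Definition centropy (A C : {set 'I_n}) : R :=
  Rminus (entropy (A :|: C)) (entropy C).

Definition finite_entropies : Prop :=
  forall i : 'I_n, ex_series (ent_term [set i]).

End Entropy.

Definition admissible (n : nat) (q : nat -> R) (X : 'I_n -> nat -> nat) : Prop :=
  is_pmf q /\ finite_entropies q X.

(* CMIs: K = (C, <Q_1,...,Q_k>); the multiset is represented by a seq. *)

Record cmi (n : nat) := mkCMI { cmi_C : {set 'I_n}; cmi_Qs : seq {set 'I_n} }.

Definition cmi_deg (n : nat) : cmi n := mkCMI set0 [::].

Definition valid (n : nat) (q : nat -> R) (X : 'I_n -> nat -> nat) (K : cmi n) : Prop :=
  Rminus (foldr (fun Q acc => Rplus (centropy q X Q (cmi_C K)) acc) R0 (cmi_Qs K))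
         (centropy q X (\bigcup_(Q <- cmi_Qs K) Q) (cmi_C K)) = R0.

Definition degenerate (n : nat) (K : cmi n) : Prop :=
  forall (q : nat -> R) (X : 'I_n -> nat -> nat), admissible q X -> valid q X K.

Definition cmi_implies (n : nat) (K K' : cmi n) : Prop :=
  forall (q : nat -> R) (X : 'I_n -> nat -> nat),
    admissible q X -> valid q X K -> valid q X K'.

Definition pur (n : nat) (K : cmi n) : cmi n :=
  mkCMI (cmi_C K) [seq Q :\: cmi_C K | Q <- cmi_Qs K & Q :\: cmi_C K != set0].

Definition Ipure (n : nat) (K : cmi n) : {set 'I_n} :=
  if 2 <= size (cmi_Qs K)
  then [set i | 2 <= count (fun Q : {set 'I_n} => i \in Q) (cmi_Qs K)]
  else set0.

Definition Ppure (n : nat) (K : cmi n) : seq {set 'I_n} :=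
  [seq Q :\: Ipure K | Q <- cmi_Qs K & Q :\: Ipure K != set0].

Definition can (n : nat) (K : cmi n) : cmi n :=
  let I := Ipure K in
  let P := Ppure K in
  if size (cmi_Qs K) <= 1 then cmi_deg n
  else if I == set0 then mkCMI (cmi_C K) P
  else if size P <= 1 then mkCMI (cmi_C K) [:: I; I]
  else mkCMI (cmi_C K) [:: I, I & P].

Definition IK (n : nat) (K : cmi n) : {set 'I_n} := Ipure (pur K).

(* the P_j of can(pur(K)) in general-form notation (t = 0 when
   can(pur K) = (C, <I_K, I_K>)) *)
Definition genP (n : nat) (K : cmi n) : seq {set 'I_n} :=
  let K0 := pur K in
  if size (cmi_Qs K0) <= 1 then [::]
  else if (IK K != set0) && (size (Ppure K0) <= 1) then [::]
  else Ppure K0.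

Definition Rcmi (n : nat) (K K' : cmi n) : cmi n :=
  let I := IK K in
  let D := IK K' :\: I in
  let T := [seq P :\: I | P <- genP K' & P :\: I != set0] in
  let C'' := cmi_C K' :\: I in
  if D == set0 then
    (if size T <= 1 then cmi_deg n else mkCMI C'' T)
  else
    (if size T <= 1 then mkCMI C'' [:: D; D] else mkCMI C'' [:: D, D & T]).

(* Main.v *)
Require Import Defs.
From Stdlib Require Import Reals Lra Lia.
From Coquelicot Require Import Coquelicot.
From mathcomp Require Import all_boot.
Set Implicit Arguments.
Unset Strict Implicit.
Unset Printing Implicit Defensive.
Local Open Scope R_scope.


Lemma sumn_S (a : nat -> R) N : sum_n a (S N) = sum_n a N + a (S N).
Proof. by rewrite sum_Sn. Qed.

Lemma sumn_le (a b : nat -> R) N : (forall k, a k <= b k) -> sum_n a N <= sum_n b N.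
Proof.
move=> H; elim: N => [|N IH]; first by rewrite !sum_O.
rewrite !sumn_S; specialize (H (S N)); lra.
Qed.

Lemma sumn_nonneg (a : nat -> R) N : (forall k, 0 <= a k) -> 0 <= sum_n a N.
Proof.
move=> H; elim: N => [|N IH]; first by rewrite sum_O.
rewrite sumn_S; specialize (H (S N)); lra.
Qed.

Lemma sumn_scal (c : R) (a : nat -> R) N : sum_n (fun k => c * a k) N = c * sum_n a N.
Proof.
elim: N => [|N IH]; first by rewrite /= sum_O (sum_O a).
rewrite !sumn_S IH; by rewrite Rmult_plus_distr_l.
Qed.

Lemma sumn_plus (a b : nat -> R) N : sum_n (fun k => a k + b k) N = sum_n a N + sum_n b N.
Proof.
elim: N => [|N IH]; first by rewrite sum_O (sum_O a) (sum_O b).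
rewrite !sumn_S IH; lra.
Qed.

Lemma sumn_zero (a : nat -> R) N : (forall k, a k = 0) -> sum_n a N = 0.
Proof.
move=> H; elim: N => [|N IH]; first by rewrite sum_O.
by rewrite sumn_S IH H; lra.
Qed.

Lemma is_series_fin (a : nat -> R) N :
  (forall k, (N < k)%coq_nat -> a k = 0) -> is_series a (sum_n a N).
Proof.
move=> H.
have E : forall m, sum_n a (m + N) = sum_n a N.
  elim=> [|m IH] //.
  rewrite addSn sumn_S IH H; first lra.
  apply/ltP; rewrite ltnS; exact: leq_addl.
have L : is_lim_seq (sum_n a) (sum_n a N).
  apply (proj2 (is_lim_seq_incr_n _ N _)).
  apply: (is_lim_seq_ext (fun _ => sum_n a N)); first by move=> m; rewrite E.
  exact: is_lim_seq_const.
exact: L.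
Qed.

Lemma ex_series_nonneg_bounded (a : nat -> R) M :
  (forall k, 0 <= a k) -> (forall N, sum_n a N <= M) ->
  ex_series a /\ Series a <= M.
Proof.
move=> H0 HM.
have [l Hl] : ex_finite_lim_seq (sum_n a).
  apply: (ex_finite_lim_seq_incr _ M) => // m.
  rewrite sumn_S; specialize (H0 (S m)); lra.
have Hs : is_series a l by exact: Hl.
split; first by exists l.
rewrite (is_series_unique _ _ Hs).
have := is_lim_seq_le (sum_n a) (fun _ => M) l M HM Hl (is_lim_seq_const M).
by [].
Qed.

Lemma psum_le_Series (a : nat -> R) N :
  (forall k, 0 <= a k) -> ex_series a -> sum_n a N <= Series a.
Proof.
move=> H0 Hex.
set b := fun k => if (k <= N)%N then a k else 0.
have Hb : is_series b (sum_n a N).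
  have -> : sum_n a N = sum_n b N.
    apply: sum_n_ext_loc => k Hk; rewrite /b.
    by have -> : (k <= N)%N by apply/leP.
  apply: is_series_fin => k Hk; rewrite /b.
  by have -> : (k <= N)%N = false by apply/negbTE; apply/negP => /leP; lia.
rewrite -(is_series_unique _ _ Hb); apply: Series_le => // k.
rewrite /b; case: ifP => _; split; try lra; exact: H0.
Qed.

Lemma ex_series_nonneg_le (a b : nat -> R) :
  (forall k, 0 <= a k <= b k) -> ex_series b -> ex_series a.
Proof.
move=> H Hb; apply: (ex_series_le a b) => // k.
rewrite /norm /= /abs /=; rewrite Rabs_pos_eq; have := H k; lra.
Qed.

Lemma Series_point w c : Series (fun k => if (k == w)%N then c else 0) = c.
Proof.
have Hf : is_series (fun k => if (k == w)%N then c else 0)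
   (sum_n (fun k => if (k == w)%N then c else 0) w).
  apply: is_series_fin => k Hk; case: eqP => // E; lia.
rewrite (is_series_unique _ _ Hf).
case: w Hf => [|w] Hf; first by rewrite sum_O.
rewrite sumn_S (@sum_n_ext_loc _ _ (fun _ => 0)).
  rewrite sumn_zero // eqxx; lra.
move=> k Hk; case: eqP => // E; lia.
Qed.


Section Basic.
Variable n : nat.
Variable q : nat -> R.
Variable X : 'I_n -> nat -> nat.
Hypothesis Hq : is_pmf q.

Notation sv := (sameval X).
Notation m := (marg q X).

Lemma sv_refl (S : {set 'I_n}) w : sv S w w.
Proof. by apply/forall_inP. Qed.
Lemma sv_sym (S : {set 'I_n}) w w' : sv S w w' = sv S w' w.
Proof.
by apply/forall_inP/forall_inP => H i /H /eqP ->.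
Qed.
Lemma sv_trans (S : {set 'I_n}) w1 w2 w3 : sv S w1 w2 -> sv S w2 w3 -> sv S w1 w3.
Proof.
by move=> /forall_inP H1 /forall_inP H2; apply/forall_inP => i Hi;
  rewrite (eqP (H1 i Hi)) (eqP (H2 i Hi)).
Qed.
Lemma sv_U (A B : {set 'I_n}) w w' : sv (A :|: B) w w' = sv A w w' && sv B w w'.
Proof.
apply/forall_inP/andP.
- move=> H; split; apply/forall_inP => i Hi; apply: H; by rewrite inE Hi ?orbT.
- move=> [/forall_inP HA /forall_inP HB] i; rewrite inE => /orP [] Hi; by [apply: HA | apply: HB].
Qed.
Lemma sv_sub (A B : {set 'I_n}) w w' : A \subset B -> sv B w w' -> sv A w w'.
Proof.
move=> /subsetP HAB /forall_inP H; apply/forall_inP => i Hi; exact: H (HAB i Hi).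
Qed.

Lemma q_ge0 w : 0 <= q w.
Proof. by case: Hq. Qed.
Lemma q_ex : ex_series q.
Proof. case: Hq => _ H; by exists 1. Qed.
Lemma q_sum : Series q = 1.
Proof. case: Hq => _ H; exact: is_series_unique. Qed.

Lemma ind_ex (b : nat -> bool) : ex_series (fun w => if b w then q w else 0).
Proof.
apply: (ex_series_nonneg_le _ q_ex) => k; case: (b k); have := q_ge0 k; lra.
Qed.

Lemma ind_le (b : nat -> bool) : Series (fun w => if b w then q w else 0) <= 1.
Proof.
rewrite -q_sum; apply: Series_le; last exact: q_ex.
move=> k; case: (b k); have := q_ge0 k; lra.
Qed.

Lemma ind_ge (b : nat -> bool) w : b w -> q w <= Series (fun w => if b w then q w else 0).
Proof.
move=> Hb.
rewrite -(Series_point w (q w)); apply: Series_le; last exact: ind_ex.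
move=> k; case: eqP => [->|_]; rewrite ?Hb; split; try lra; try exact: q_ge0.
case: (b k); try lra; exact: q_ge0.
Qed.

Lemma ind_ge0 (b : nat -> bool) : 0 <= Series (fun w => if b w then q w else 0).
Proof.
have H0 : forall k, 0 <= (if b k then q k else 0) by move=> k; case: (b k); have := q_ge0 k; lra.
apply: Rle_trans (psum_le_Series 0 H0 (ind_ex b)).
by rewrite sum_O.
Qed.

End Basic.


Lemma ln_le' x y : 0 < x -> x <= y -> ln x <= ln y.
Proof.
move=> Hx [H|->]; last lra.
left; exact: ln_increasing.
Qed.

Lemma ln_le_sub1 x : 0 < x -> ln x <= x - 1.
Proof. move=> Hx; have := exp_ineq1_le (ln x); rewrite exp_ln //; lra. Qed.

Lemma Rinv_ge0 x : 0 <= x -> 0 <= / x.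
Proof.
move=> [H|<-]; last by rewrite Rinv_0; lra.
left; exact: Rinv_pos.
Qed.

Section Marg.
Variable n : nat.
Variable q : nat -> R.
Variable X : 'I_n -> nat -> nat.
Hypothesis Hq : is_pmf q.

Notation sv := (sameval X).
Notation m := (marg q X).

Lemma m_ge (S : {set 'I_n}) w : q w <= m S w.
Proof. apply: ind_ge => //; exact: sv_refl. Qed.
Lemma m_ge0 (S : {set 'I_n}) w : 0 <= m S w.
Proof. exact: ind_ge0. Qed.
Lemma m_le1 (S : {set 'I_n}) w : m S w <= 1.
Proof. exact: ind_le. Qed.
Lemma m_pos (S : {set 'I_n}) w : 0 < q w -> 0 < m S w.
Proof. move=> H; have := m_ge S w; lra. Qed.
Lemma m_mono (A B : {set 'I_n}) w : A \subset B -> m B w <= m A w.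
Proof.
move=> HAB; apply: Series_le; last exact: ind_ex.
move=> k; case E: (sv B w k).
  rewrite (sv_sub HAB E); have := q_ge0 Hq k; lra.
case: (sv A w k); have := q_ge0 Hq k; lra.
Qed.
Lemma m_ext (S : {set 'I_n}) w v : sv S w v -> m S w = m S v.
Proof.
move=> H; apply: Series_ext => k.
have -> : sv S w k = sv S v k; last by [].
apply/idP/idP => H'.
  by apply: sv_trans H'; rewrite sv_sym.
exact: sv_trans H H'.
Qed.

Lemma ent_ge0 (S : {set 'I_n}) w : 0 <= ent_term q X S w.
Proof.
rewrite /ent_term; have [H|H] := Rle_lt_or_eq_dec _ _ (q_ge0 Hq w); last by rewrite -H; lra.
apply: Rmult_le_pos; first lra.
have := ln_le' (m_pos S H) (m_le1 S w); rewrite ln_1; lra.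
Qed.

Lemma ent_mono (A B : {set 'I_n}) w : A \subset B -> ent_term q X A w <= ent_term q X B w.
Proof.
move=> HAB; rewrite /ent_term; have [H|H] := Rle_lt_or_eq_dec _ _ (q_ge0 Hq w); last by rewrite -H; lra.
apply: Rmult_le_compat_l; first lra.
have := ln_le' (m_pos B H) (m_mono w HAB); lra.
Qed.

Lemma sumn_Series (F : nat -> nat -> R) N :
  (forall w, ex_series (F w)) ->
  sum_n (fun w => Series (F w)) N = Series (fun u => sum_n (fun w => F w u) N)
  /\ ex_series (fun u => sum_n (fun w => F w u) N).
Proof.
move=> Hex; elim: N => [|N [IH1 IH2]].
  rewrite sum_O; split; [apply: Series_ext => u; by rewrite sum_O |].
  apply: ex_series_ext (Hex 0%N) => u; by rewrite sum_O.
rewrite sumn_S IH1; split.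
  rewrite -Series_plus //; apply: Series_ext => u; by rewrite sumn_S.
apply: (ex_series_ext (fun u => plus (sum_n (fun w => F w u) N) (F N.+1 u))).
  by move=> u; rewrite sumn_S.
exact: ex_series_plus.
Qed.

Variables P1 P2 P12 C0 : {set 'I_n}.
Hypothesis H12 : forall w w', sv P12 w w' = sv P1 w w' && sv P2 w w'.
Hypothesis H10 : forall w w', sv P1 w w' -> sv C0 w w'.
Hypothesis H20 : forall w w', sv P2 w w' -> sv C0 w w'.

Lemma st3 u v N :
  sum_n (fun w => (if sv P2 w v && sv P1 w u then q w else 0) / m P12 w) N <= 1.
Proof.
set M := Series (fun z => if sv P2 z v && sv P1 z u then q z else 0).
have E : forall w, (if sv P2 w v && sv P1 w u then q w else 0) / m P12 w =
                   / M * (if sv P2 w v && sv P1 w u then q w else 0).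
  move=> w; case Ew: (sv P2 w v && sv P1 w u); last by rewrite /Rdiv; lra.
  move/andP: Ew => [E2 E1].
  have -> : m P12 w = M.
    apply: Series_ext => z; rewrite H12.
    have -> : sv P1 w z = sv P1 z u.
      apply/idP/idP => H.
        by apply: (sv_trans (w2:=w)); rewrite // sv_sym.
      by apply: (sv_trans E1); rewrite sv_sym.
    have -> : sv P2 w z = sv P2 z v.
      apply/idP/idP => H.
        by apply: (sv_trans (w2:=w)); rewrite // sv_sym.
      by apply: (sv_trans E2); rewrite sv_sym.
    by rewrite andbC.
  rewrite /Rdiv; lra.
rewrite (sum_n_ext _ _ N E) sumn_scal.
have H0 : forall k, 0 <= (if sv P2 k v && sv P1 k u then q k else 0).
  by move=> k; case: (_ && _); have := q_ge0 Hq k; lra.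
have Hs := psum_le_Series N H0 (ind_ex Hq _).
have Hs0 := sumn_nonneg N H0.
fold M in Hs.
have [HM|HM] := Rle_lt_or_eq_dec _ _ (Rle_trans _ _ _ Hs0 Hs).
  apply: (Rle_trans _ (/ M * M)); last by rewrite Rinv_l; lra.
  apply: Rmult_le_compat_l => //; left; exact: Rinv_pos.
rewrite -HM Rinv_0; lra.
Qed.

Lemma st2 v N :
  sum_n (fun w => (if sv P2 w v then q w else 0) * m P1 w / m P12 w) N <= m C0 v.
Proof.
set F := fun w u => (if sv P2 w v then q w else 0) / m P12 w * (if sv P1 w u then q u else 0).
have Hex : forall w, ex_series (F w).
  move=> w; apply: (ex_series_ext (fun u => scal ((if sv P2 w v then q w else 0) / m P12 w) (if sv P1 w u then q u else 0))) => //.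
  apply: ex_series_scal_l; exact: ind_ex.
have E : forall w, (if sv P2 w v then q w else 0) * m P1 w / m P12 w = Series (F w).
  move=> w; rewrite /F Series_scal_l.
  have -> : Series (fun u => if sv P1 w u then q u else 0) = m P1 w by [].
  rewrite /Rdiv; ring.
rewrite (sum_n_ext _ _ N E).
have [-> Hex2] := sumn_Series N Hex.
apply: Series_le; last exact: ind_ex.
move=> u; split.
  apply: sumn_nonneg => w; rewrite /F; apply: Rmult_le_pos.
    apply: Rmult_le_pos; first by case: (sv P2 w v); have := q_ge0 Hq w; lra.
    apply: Rinv_ge0; exact: m_ge0.
  by case: (sv P1 w u); have := q_ge0 Hq u; lra.
have E2 : forall w, F w u = q u * ((if sv P2 w v && sv P1 w u then q w else 0) / m P12 w).
  move=> w; rewrite /F; case: (sv P2 w v); case: (sv P1 w u) => /=; rewrite /Rdiv; ring.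
rewrite (sum_n_ext _ _ N E2) sumn_scal.
case Ec: (sv C0 v u).
  have := st3 u v N; have := q_ge0 Hq u; nra.
rewrite sumn_zero; first lra.
move=> w; case Ew: (sv P2 w v && sv P1 w u); last by rewrite /Rdiv; lra.
move/andP: Ew => [E2' E1'].
have : sv C0 v u.
  apply: (sv_trans (w2:=w)); first by rewrite sv_sym; exact: H20.
  exact: H10.
by rewrite Ec.
Qed.

Lemma st1 N :
  sum_n (fun w => q w * m P1 w * m P2 w / (m P12 w * m C0 w)) N <= 1.
Proof.
set F := fun w v => q w * m P1 w / (m P12 w * m C0 w) * (if sv P2 w v then q v else 0).
have Hex : forall w, ex_series (F w).
  move=> w; apply: (ex_series_ext (fun v => scal (q w * m P1 w / (m P12 w * m C0 w)) (if sv P2 w v then q v else 0))) => //.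
  apply: ex_series_scal_l; exact: ind_ex.
have E : forall w, q w * m P1 w * m P2 w / (m P12 w * m C0 w) = Series (F w).
  move=> w; rewrite /F Series_scal_l.
  have -> : Series (fun u => if sv P2 w u then q u else 0) = m P2 w by [].
  rewrite /Rdiv; ring.
rewrite (sum_n_ext _ _ N E).
have [-> Hex2] := sumn_Series N Hex.
rewrite -(q_sum Hq); apply: Series_le; last exact: q_ex.
move=> v; split.
  apply: sumn_nonneg => w; rewrite /F; apply: Rmult_le_pos.
    apply: Rmult_le_pos; first by apply: Rmult_le_pos; [exact: q_ge0 | exact: m_ge0].
    apply: Rinv_ge0; apply: Rmult_le_pos; exact: m_ge0.
  by case: (sv P2 w v); have := q_ge0 Hq v; lra.
have E2 : forall w, F w v = q v / m C0 v * ((if sv P2 w v then q w else 0) * m P1 w / m P12 w).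
  move=> w; rewrite /F; case Ew: (sv P2 w v); last by rewrite /Rdiv; ring.
  rewrite (m_ext (S:=C0) (H20 Ew)) /Rdiv Rinv_mult; ring.
rewrite (sum_n_ext _ _ N E2) sumn_scal.
have Hst := st2 v N.
have [Hv|Hv] := Rle_lt_or_eq_dec _ _ (q_ge0 Hq v); last first.
  rewrite -Hv /Rdiv Rmult_0_l Rmult_0_l; lra.
have Hm := m_pos C0 Hv.
apply: (Rle_trans _ (q v / m C0 v * m C0 v)).
  apply: Rmult_le_compat_l => //; apply: Rmult_le_pos; [lra | left; exact: Rinv_pos].
rewrite /Rdiv Rmult_assoc Rinv_l; lra.
Qed.

End Marg.


Section Ent.
Variable n : nat.
Variable q : nat -> R.
Variable X : 'I_n -> nat -> nat.
Hypothesis Hq : is_pmf q.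

Notation sv := (sameval X).
Notation m := (marg q X).
Notation ent := (ent_term q X).

Lemma ex_plusR (a b : nat -> R) : ex_series a -> ex_series b -> ex_series (fun k => a k + b k).
Proof. move=> Ha Hb; exact: (ex_series_plus _ _ Ha Hb). Qed.
Lemma ex_minusR (a b : nat -> R) : ex_series a -> ex_series b -> ex_series (fun k => a k - b k).
Proof. move=> Ha Hb; exact: (ex_series_minus _ _ Ha Hb). Qed.

Lemma submod_core (A B C : {set 'I_n}) :
  ex_series (ent (A :|: C)) -> ex_series (ent (B :|: C)) ->
  [/\ ex_series (ent (A :|: B :|: C)), ex_series (ent C) &
   entropy q X (A :|: B :|: C) + entropy q X C <= entropy q X (A :|: C) + entropy q X (B :|: C)].
Proof.
move=> E1 E2.
set P1 := A :|: C; set P2 := B :|: C; set P12 := A :|: B :|: C.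
have H12 : forall w w', sv P12 w w' = sv P1 w w' && sv P2 w w'.
  move=> w w'; rewrite /P12 /P1 /P2 !sv_U.
  by case: (sv A w w'); case: (sv B w w'); case: (sv C w w').
have H10 : forall w w', sv P1 w w' -> sv C w w' by move=> w w'; rewrite /P1 sv_U => /andP [].
have H20 : forall w w', sv P2 w w' -> sv C w w' by move=> w w'; rewrite /P2 sv_U => /andP [].
set g := fun w => q w * m P1 w * m P2 w / (m P12 w * m C w).
have Hg0 : forall w, 0 <= g w.
  move=> w; rewrite /g; apply: Rmult_le_pos.
    apply: Rmult_le_pos; [apply: Rmult_le_pos; [exact: q_ge0 | exact: m_ge0] | exact: m_ge0].
  apply: Rinv_ge0; apply: Rmult_le_pos; exact: m_ge0.
have [Gex Gle] := ex_series_nonneg_bounded Hg0 (st1 Hq H12 H10 H20).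
have Hpt : forall w, ent P12 w + ent C w <= ent P1 w + ent P2 w + (g w - q w).
  move=> w; rewrite /ent_term /g.
  have [Hw|Hw] := Rle_lt_or_eq_dec _ _ (q_ge0 Hq w); last by rewrite -Hw /Rdiv; lra.
  have m1 := m_pos X Hq P1 Hw; have m2 := m_pos X Hq P2 Hw.
  have m12 := m_pos X Hq P12 Hw; have m0 := m_pos X Hq C Hw.
  set r := m P1 w * m P2 w / (m P12 w * m C w).
  have Hr : 0 < r.
    rewrite /r /Rdiv; apply: Rmult_lt_0_compat; first exact: Rmult_lt_0_compat.
    apply: Rinv_pos; exact: Rmult_lt_0_compat.
  have Hln : ln r = ln (m P1 w) + ln (m P2 w) - ln (m P12 w) - ln (m C w).
    have Hi1 := Rinv_pos _ m12; have Hi0 := Rinv_pos _ m0.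
    rewrite /r /Rdiv Rinv_mult ln_mult; [|exact: Rmult_lt_0_compat|exact: Rmult_lt_0_compat].
    rewrite ln_mult // ln_mult // !ln_Rinv //; lra.
  have := ln_le_sub1 Hr; rewrite Hln => Hl.
  have -> : q w * m P1 w * m P2 w / (m P12 w * m C w) = q w * r by rewrite /r /Rdiv; ring.
  nra.
have Ex12 : ex_series (ent P12).
  apply: (ex_series_nonneg_le (b := fun w => ent P1 w + ent P2 w + g w)).
    move=> w; split; first exact: ent_ge0.
    have := Hpt w; have := ent_ge0 X Hq C w; have := q_ge0 Hq w; lra.
  apply: ex_plusR => //; exact: ex_plusR.
have Ex0 : ex_series (ent C).
  apply: (ex_series_nonneg_le (b := ent P1)) => // w; split; first exact: ent_ge0.
  apply: ent_mono => //; exact: subsetUr.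
split => //.
rewrite /entropy -Series_plus //.
apply: (Rle_trans _ (Series (fun w => (ent P1 w + ent P2 w) + (g w - q w)))).
  apply: Series_le.
    move=> w; split; first by have := ent_ge0 X Hq P12 w; have := ent_ge0 X Hq C w; lra.
    by have := Hpt w; lra.
  apply: ex_plusR; [exact: ex_plusR | apply: ex_minusR => //; exact: q_ex].
rewrite Series_plus; [|exact: ex_plusR|apply: ex_minusR => //; exact: q_ex].
rewrite Series_plus // Series_minus //; last exact: q_ex.
rewrite (q_sum Hq); lra.
Qed.

Lemma ent_set0 w : ent set0 w = 0.
Proof.
rewrite /ent_term /marg.
have -> : Series (fun w' => if sv set0 w w' then q w' else R0) = 1.
  rewrite -(q_sum Hq); apply: Series_ext => k.
  by have -> : sv set0 w k by apply/forall_inP => i; rewrite inE.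
rewrite ln_1; lra.
Qed.

Hypothesis Hfin : finite_entropies q X.

Lemma ex_ent (S : {set 'I_n}) : ex_series (ent S).
Proof.
move: {2}#|S| (leqnn #|S|) => k; elim: k S => [|k IH] S HS.
  have -> : S = set0 by apply/eqP; rewrite -cards_eq0 -leqn0.
  apply: (ex_series_ext (fun _ => 0)); first by move=> w; rewrite ent_set0.
  have H := @is_series_fin (fun _ : nat => 0) 0%N (fun _ _ => erefl).
  rewrite sum_O in H; by exists 0.
case: (set_0Vmem S) => [->|[i Hi]].
  apply: IH; by rewrite cards0.
have -> : S = (S :\ i) :|: [set i] :|: set0.
  apply/setP => j; rewrite !inE; case: eqP => [->|] /=; by rewrite ?Hi ?orbF ?orbT //; case: (j \in S).
have E1 : ex_series (ent (S :\ i :|: set0)).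
  rewrite setU0; apply: IH; move: HS; rewrite (cardsD1 i S) Hi add1n ltnS; exact.
have E2 : ex_series (ent ([set i] :|: set0)) by rewrite setU0; exact: Hfin.
by case: (submod_core E1 E2).
Qed.

Definition hH (S : {set 'I_n}) := entropy q X S.

Lemma h_mono (A B : {set 'I_n}) : A \subset B -> hH A <= hH B.
Proof.
move=> HAB; apply: Series_le; last exact: ex_ent.
move=> w; split; [exact: ent_ge0 | exact: ent_mono].
Qed.

Lemma h_sub (A B : {set 'I_n}) : hH (A :|: B) + hH (A :&: B) <= hH A + hH B.
Proof.
have := @submod_core A B (A :&: B).
have -> : A :|: (A :&: B) = A by apply/setP => j; rewrite !inE; case: (j \in A); case: (j \in B).
have -> : B :|: (A :&: B) = B by apply/setP => j; rewrite !inE; case: (j \in A); case: (j \in B).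
have -> : A :|: B :|: (A :&: B) = A :|: B by apply/setP => j; rewrite !inE; case: (j \in A); case: (j \in B).
by case; try exact: ex_ent.
Qed.

End Ent.


Section Poly.
Variable n : nat.
Implicit Types (A B S : {set 'I_n}) (s : seq {set 'I_n}).

Definition sumg (g : {set 'I_n} -> R) s := foldr (fun Q acc => Rplus (g Q) acc) R0 s.
Definition vg (g : {set 'I_n} -> R) s := Rminus (sumg g s) (g (\bigcup_(Q <- s) Q)).
Definition I2 s : {set 'I_n} := [set i | (2 <= count (fun Q : {set 'I_n} => i \in Q) s)%N].
Definition pD S s := [seq Q :\: S | Q <- s & Q :\: S != set0].

Lemma bigcup_cons A s : \bigcup_(Q <- A :: s) Q = A :|: \bigcup_(Q <- s) Q.
Proof. by rewrite big_cons. Qed.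
Lemma bigcup_nil : \bigcup_(Q <- [::]) Q = (set0 : {set 'I_n}).
Proof. by rewrite big_nil. Qed.

Lemma in_bigcup_count i s : (i \in \bigcup_(Q <- s) Q) = (0 < count (fun Q : {set 'I_n} => i \in Q) s)%N.
Proof.
elim: s => [|A s IH]; first by rewrite bigcup_nil inE.
rewrite bigcup_cons inE IH /=; by case: (i \in A).
Qed.

Lemma I2_cons A s : I2 (A :: s) = I2 s :|: (A :&: \bigcup_(Q <- s) Q).
Proof.
apply/setP => i; rewrite !inE in_bigcup_count /=.
case: (i \in A) => /=; rewrite ?andbF ?orbF; case: (count _ s) => [|[|k]] //.
Qed.

Lemma bigcup_pD S s : \bigcup_(Q <- pD S s) Q = (\bigcup_(Q <- s) Q) :\: S.
Proof.
elim: s => [|A s IH]; first by rewrite /pD /= !bigcup_nil set0D.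
rewrite /pD /=; case: ifP => HA.
  by rewrite map_cons !bigcup_cons -/(pD S s) IH setDUl.
rewrite -/(pD S s) IH bigcup_cons setDUl.
move/negbFE/eqP: HA => ->; by rewrite set0U.
Qed.

Lemma vg_ext (g g' : {set 'I_n} -> R) s : (forall A, g A = g' A) -> vg g s = vg g' s.
Proof.
move=> E; rewrite /vg E; congr Rminus.
elim: s => //= A s ->; by rewrite E.
Qed.

Variable g : {set 'I_n} -> R.
Hypothesis g0 : g set0 = 0.

Lemma small s : (size s <= 1)%N -> vg g s = 0.
Proof.
case: s => [|A [|B s]] //= _; rewrite /vg /=.
  rewrite bigcup_nil g0; lra.
rewrite bigcup_cons bigcup_nil setU0; lra.
Qed.

Lemma L_diff S s : (forall A, g A = g (A :\: S)) -> vg g s = vg g (pD S s).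
Proof.
move=> hS; rewrite /vg bigcup_pD -hS; congr Rminus.
elim: s => [|A s IH] //=; rewrite /pD /=; case: ifP => HA /=.
  by rewrite -/(pD S s) -IH -hS.
rewrite -/(pD S s) -IH hS; move/negbFE/eqP: HA => ->; rewrite g0; lra.
Qed.

Hypothesis gm : forall A B, A \subset B -> g A <= g B.
Hypothesis gs : forall A B, g (A :|: B) + g (A :&: B) <= g A + g B.

Lemma gpos A : 0 <= g A.
Proof. rewrite -g0; apply: gm; exact: sub0set. Qed.

Lemma KL s : g (\bigcup_(Q <- s) Q) + g (I2 s) <= sumg g s.
Proof.
elim: s => [|A s IH].
  rewrite /= bigcup_nil g0.
  lra.
rewrite bigcup_cons I2_cons /=.
set U := \bigcup_(Q <- s) Q in IH *.
have h1 := gs A U.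
have h2 := gs (I2 s) (A :&: U).
have h3 := gpos (I2 s :&: (A :&: U)).
lra.
Qed.

Lemma vg_ge0 s : 0 <= vg g s.
Proof. have := KL s; have := gpos (I2 s); rewrite /vg; lra. Qed.

Lemma FDg S A : g S = 0 -> g (A :|: S) = g A.
Proof.
move=> HS; have := gs A S; have := gpos (A :&: S); have := gm (subsetUl A S); lra.
Qed.

Lemma gD S A : g S = 0 -> g (A :\: S) = g A.
Proof.
move=> HS; apply: Rle_antisym; first by apply: gm; exact: subsetDl.
rewrite -(FDg (A :\: S) HS); apply: gm.
apply/subsetP => i Hi; rewrite !inE; by case: (i \in S); rewrite ?Hi.
Qed.

Lemma CHAR s : vg g s = 0 <-> g (I2 s) = 0 /\ vg g (pD (I2 s) s) = 0.
Proof.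
split.
  move=> H0.
  have HI : g (I2 s) = 0.
    have := KL s; have := gpos (I2 s); rewrite /vg in H0; lra.
  split => //; rewrite -L_diff // => A; by rewrite gD.
move=> [HI HV]; rewrite (L_diff (S:=I2 s)) // => A; by rewrite gD.
Qed.

Lemma JJ J s : vg g (J :: J :: s) = 0 <-> g J = 0 /\ vg g s = 0.
Proof.
rewrite /vg /= !bigcup_cons setUA setUid.
set U := \bigcup_(Q <- s) Q.
have h1 := gs J U; have h2 := gpos (J :&: U); have h3 := vg_ge0 s; rewrite /vg -/U in h3.
have h4 := gpos J.
split.
  move=> H.
  have HJ : g J = 0 by lra.
  split => //; move: H; rewrite setUC (FDg (S:=J) U HJ); lra.
move=> [HJ HV]; rewrite setUC (FDg (S:=J) U HJ); lra.
Qed.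

End Poly.


Definition Gh (n : nat) (h : {set 'I_n} -> R) (C A : {set 'I_n}) : R := Rminus (h (A :|: C)) (h C).

Lemma valid_vg n q X (K : cmi n) : valid q X K <-> vg (Gh (entropy q X) (cmi_C K)) (cmi_Qs K) = 0.
Proof. by []. Qed.

Lemma ln2_pos : 0 < ln 2.
Proof. rewrite -ln_1; apply: ln_increasing; lra. Qed.

Lemma fin1_ex (f : nat -> R) : (forall w, (1 < w)%N -> f w = 0) -> ex_series f.
Proof.
move=> H; exists (sum_n f 1); apply: is_series_fin => k Hk; apply: H; apply/ltP; lia.
Qed.

Section Construct.
Variable n : nat.
Variables (C'' : {set 'I_n}).
Definition qc (w : nat) : R := if (w <= 1)%N then / 2 else 0.
Definition Xc (j : 'I_n) (w : nat) : nat := if j \in C'' then 0%N else w.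

Lemma qc_pmf : is_pmf qc.
Proof.
split; first by move=> w; rewrite /qc; case: ifP => _; lra.
have -> : R1 = sum_n qc 1 by rewrite sumn_S sum_O /qc /=; lra.
apply: is_series_fin => k Hk; rewrite /qc; case: ifP => // /leP; lia.
Qed.

Lemma ent_c_zero S w : (1 < w)%N -> ent_term qc Xc S w = 0.
Proof. move=> Hw; rewrite /ent_term /qc; case: ifP => H; first by rewrite ltnNge H in Hw. lra. Qed.

Lemma ent_c (S : {set 'I_n}) : entropy qc Xc S = if S \subset C'' then 0 else ln 2.
Proof.
case: ifP => HS.
  rewrite /entropy -(Series_point 0%N 0); apply: Series_ext => w.
  rewrite /ent_term /marg.
  have -> : Series (fun w' => if sameval Xc S w w' then qc w' else R0) = 1.
    rewrite -(q_sum qc_pmf); apply: Series_ext => k.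
    suff -> : sameval Xc S w k by [].
    apply/forall_inP => i Hi; by rewrite /Xc (subsetP HS i Hi).
  rewrite ln_1; case: eqP => _; lra.
have [j Hj Hjn] : exists2 j, j \in S & j \notin C''.
  move/negbT: HS => /subsetPn [j ? ?]; by exists j.
have Hsv : forall w w', (w <= 1)%N -> (w' <= 1)%N -> sameval Xc S w w' = (w == w').
  move=> w w' Hw Hw'; apply/idP/eqP => [/forall_inP H|->]; last exact: sv_refl.
  have := H j Hj; by rewrite /Xc (negbTE Hjn) => /eqP.
have Hm : forall w, (w <= 1)%N -> marg qc Xc S w = / 2.
  move=> w Hw; rewrite /marg -(Series_point w (/ 2)); apply: Series_ext => k.
  case: (leqP k 1) => Hk.
    rewrite Hsv //; case: eqP => [E|E]; first by rewrite E eqxx /qc Hk.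
    by case: eqP => // E'; case: E.
  rewrite /qc (leqNgt k 1) Hk /=; case: eqP => [E|_]; last by case: ifP.
  by rewrite E ltnNge Hw in Hk.
have E : forall w, ent_term qc Xc S w = if (w <= 1)%N then / 2 * ln 2 else 0.
  move=> w; case: ifP => Hw; last by apply: ent_c_zero; rewrite ltnNge Hw.
  rewrite /ent_term Hm // /qc Hw ln_Rinv; [ring | lra].
rewrite /entropy (Series_ext _ _ E).
have Hs := @is_series_fin (fun w => if (w <= 1)%N then / 2 * ln 2 else 0) 1%N.
rewrite (is_series_unique _ _ (Hs _)).
  rewrite sumn_S sum_O /=; lra.
move=> k Hk; case: ifP => // /leP; lia.
Qed.

Lemma qc_adm : admissible qc Xc.
Proof.
split; first exact: qc_pmf.
move=> i; apply: fin1_ex => w; exact: ent_c_zero.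
Qed.

Lemma sumg_c (c : R) s :
  sumg (fun A : {set 'I_n} => if A \subset C'' then 0 else c) s =
  INR (count (fun Q : {set 'I_n} => ~~ (Q \subset C'')) s) * c.
Proof.
elim: s => [|A s IH]; first by rewrite /=; lra.
rewrite /sumg /= -/(sumg _ s) IH; case: ifP => _; rewrite ?add0n ?add1n ?S_INR; set k := INR _; ring.
Qed.

Lemma bigcup_notsub s : (0 < count (fun Q : {set 'I_n} => ~~ (Q \subset C'')) s)%N ->
  ~~ (\bigcup_(Q <- s) Q \subset C'').
Proof.
elim: s => [|A s IH] //=; rewrite bigcup_cons subUset negb_and.
case: (A \subset C'') => //= H; apply: IH; exact: H.
Qed.

Lemma construct (C : {set 'I_n}) (s s'' : seq {set 'I_n}) :
  ~~ (C \subset C'') -> (2 <= count (fun Q : {set 'I_n} => ~~ (Q \subset C'')) s'')%N ->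
  vg (Gh (entropy qc Xc) C) s = 0 /\ vg (Gh (entropy qc Xc) C'') s'' <> 0.
Proof.
move=> HC Hcnt; split.
  have E : forall A, Gh (entropy qc Xc) C A = 0.
    move=> A; rewrite /Gh !ent_c subUset (negbTE HC) andbF; lra.
  rewrite /vg E; have -> : sumg (Gh (entropy qc Xc) C) s = 0.
    by elim: s => //= A s ->; rewrite E; lra.
  lra.
have E : forall A, Gh (entropy qc Xc) C'' A = if A \subset C'' then 0 else ln 2.
  move=> A; rewrite /Gh !ent_c subUset subxx andbT; case: ifP; lra.
rewrite (vg_ext _ E) /vg sumg_c.
rewrite (negbTE (bigcup_notsub _)); last by apply: leq_trans Hcnt.
have H2 : 2 <= INR (count (fun Q : {set 'I_n} => ~~ (Q \subset C'')) s'').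
  have -> : 2 = INR 2 by rewrite /=; lra.
  apply: le_INR; exact/leP.
have := ln2_pos; set k := INR _ in H2 *; nra.
Qed.
End Construct.


Section Glue.
Variable n : nat.
Implicit Types (A B S : {set 'I_n}) (s : seq {set 'I_n}).

Lemma size_pD S s : (size (pD S s) <= size s)%N.
Proof. by rewrite /pD size_map size_filter count_size. Qed.

Lemma size_pD_count S s : size (pD S s) = count (fun Q : {set 'I_n} => ~~ (Q \subset S)) s.
Proof. rewrite /pD size_map size_filter; apply: eq_count => Q; by rewrite setD_eq0. Qed.

Lemma mem_pD S s P : P \in pD S s -> exists2 Q, Q \in s & P = Q :\: S /\ P != set0.
Proof.
move/mapP => [Q]; rewrite mem_filter => /andP [HQ1 HQ2] ->; exists Q => //.
Qed.

Lemma pD_disj S s P i : P \in pD S s -> i \in P -> i \notin S.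
Proof. move=> /mem_pD [Q _ [-> _]]; rewrite inE; by case/andP. Qed.

Lemma pD_sub S s P : P \in pD S s -> exists2 Q, Q \in s & P \subset Q.
Proof. move=> /mem_pD [Q HQ [-> _]]; exists Q => //; exact: subsetDl. Qed.

Lemma I2_mem s i : i \in I2 s -> exists2 Q, Q \in s & i \in Q.
Proof.
rewrite inE => H; have : has (fun Q : {set 'I_n} => i \in Q) s by rewrite has_count; apply: leq_trans H.
by move/hasP.
Qed.

Lemma Ipure_eq (C : {set 'I_n}) s : Ipure (mkCMI C s) = if (2 <= size s)%N then I2 s else set0.
Proof. by []. Qed.

Lemma IK_disj (K : cmi n) i : i \in IK K -> i \notin cmi_C K.
Proof.
rewrite /IK /pur Ipure_eq; case: ifP => _; last by rewrite inE.
move/I2_mem => [Q HQ HiQ]; exact: pD_disj HQ HiQ.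
Qed.

Variable h : {set 'I_n} -> R.

Lemma Gh_diff (C A : {set 'I_n}) : Gh h C A = Gh h C (A :\: C).
Proof. rewrite /Gh; congr (Rminus (h _) _); apply/setP => i; rewrite !inE; by case: (i \in C); rewrite ?orbT ?orbF. Qed.

Lemma Gh0 (C : {set 'I_n}) : Gh h C set0 = 0.
Proof. rewrite /Gh set0U; lra. Qed.

Lemma vg_pur (C : {set 'I_n}) s : vg (Gh h C) s = vg (Gh h C) (pD C s).
Proof. apply: L_diff; [exact: Gh0 | exact: Gh_diff]. Qed.

Lemma small_valid (C : {set 'I_n}) s : (size (pD C s) <= 1)%N -> vg (Gh h C) s = 0.
Proof. move=> H; rewrite vg_pur; apply: small => //; exact: Gh0. Qed.

Hypothesis hm : forall A B, A \subset B -> h A <= h B.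
Hypothesis hs : forall A B, h (A :|: B) + h (A :&: B) <= h A + h B.

Lemma Gh_m (C A B : {set 'I_n}) : A \subset B -> Gh h C A <= Gh h C B.
Proof. move=> H; rewrite /Gh; have := hm (setSU C H); lra. Qed.

Lemma Gh_s (C A B : {set 'I_n}) : Gh h C (A :|: B) + Gh h C (A :&: B) <= Gh h C A + Gh h C B.
Proof.
rewrite /Gh; have := hs (A :|: C) (B :|: C).
have -> : A :|: C :|: (B :|: C) = A :|: B :|: C.
  apply/setP => i; rewrite !inE; by case: (i \in A); case: (i \in B); case: (i \in C).
have -> : (A :|: C) :&: (B :|: C) = A :&: B :|: C.
  apply/setP => i; rewrite !inE; by case: (i \in A); case: (i \in B); case: (i \in C).
lra.
Qed.

Lemma FDh S C (Y : {set 'I_n}) : h (S :|: C) = h C -> C \subset Y -> h (S :|: Y) = h Y.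
Proof.
move=> HS HCY; apply: Rle_antisym; last by apply: hm; exact: subsetUr.
have := hs (S :|: C) Y.
have -> : S :|: C :|: Y = S :|: Y.
  apply/setP => i; rewrite !inE; case E: (i \in C); last by rewrite orbF.
  by rewrite (subsetP HCY i E) !orbT.
have := hm (A:=C) (B:=(S :|: C) :&: Y).
rewrite subsetI subsetUr HCY => /(_ isT); lra.
Qed.

Lemma IK_zero (K : cmi n) : vg (Gh h (cmi_C K)) (cmi_Qs K) = 0 -> Gh h (cmi_C K) (IK K) = 0.
Proof.
rewrite vg_pur /IK /pur Ipure_eq; case: ifP => _; last by rewrite Gh0.
move/(CHAR (Gh0 _) (Gh_m (cmi_C K)) (Gh_s (cmi_C K))); by case.
Qed.

Lemma GL (K K' : cmi n) :
  vg (Gh h (cmi_C K)) (cmi_Qs K) = 0 -> cmi_C K \subset cmi_C K' ->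
  (2 <= size (pD (cmi_C K') (cmi_Qs K')))%N ->
  (vg (Gh h (cmi_C K')) (cmi_Qs K') = 0 <->
   vg (Gh h (cmi_C (Rcmi K K'))) (cmi_Qs (Rcmi K K')) = 0).
Proof.
move=> HK HCC Hsz.
set C := cmi_C K; set C' := cmi_C K'.
set I := IK K.
have HI := IK_zero HK; rewrite -/C -/I in HI.
have HIC : h (I :|: C) = h C by rewrite /Gh in HI; lra.
have HY : forall Y : {set 'I_n}, C \subset Y -> h (I :|: Y) = h Y by move=> Y; exact: FDh.
have CI : C \subset C' :\: I.
  apply/subsetP => i Hi; rewrite inE (subsetP HCC i Hi) andbT.
  apply/negP => /IK_disj; by rewrite -/C Hi.
have E'' : forall A, Gh h (C' :\: I) A = Gh h C' A.
  have Hh : forall A, h (A :|: (C' :\: I)) = h (A :|: C').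
    move=> A; rewrite -HY; last by apply: subset_trans CI (subsetUr _ _).
    rewrite -(HY (A :|: C')); last by apply: subset_trans HCC (subsetUr _ _).
    congr h; apply/setP => i; rewrite !inE; by case: (i \in I); case: (i \in A); case: (i \in C').
  move=> A; rewrite /Gh Hh; have := Hh set0; rewrite !set0U => ->; by [].
have g'0 := Gh0 C'.
have g'm : forall A B, A \subset B -> (Gh h C') A <= (Gh h C') B by move=> A B; exact: Gh_m.
have g's : forall A B, (Gh h C') (A :|: B) + (Gh h C') (A :&: B) <= (Gh h C') A + (Gh h C') B by move=> A B; exact: Gh_s.
have g'I : (Gh h C') I = 0 by rewrite /Gh HY //; lra.
set Q2 := pD C' (cmi_Qs K').
have HIK' : IK K' = I2 Q2 by rewrite /IK /pur Ipure_eq -/C' -/Q2 Hsz.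
set D := IK K' :\: I.
set T := [seq P :\: I | P <- genP K' & P :\: I != set0].
have KV : vg (Gh h C') (cmi_Qs K') = 0 <-> (Gh h C') D = 0 /\ vg (Gh h C') T = 0.
  rewrite vg_pur -/Q2 (CHAR g'0 g'm g's).
  have -> : (Gh h C') D = (Gh h C') (I2 Q2) by rewrite /D HIK' (gD g'0 g'm g's (I2 Q2) g'I).
  rewrite (L_diff (S:=I) g'0); last by move=> A; rewrite (gD g'0 g'm g's A g'I).
  suff -> : vg (Gh h C') (pD I (pD (I2 Q2) Q2)) = 0 <-> vg (Gh h C') T = 0 by [].
  have -> : T = pD I (genP K') by [].
  rewrite /genP /pur /= -/C' -/Q2 -/(IK K') HIK' ifN; last by rewrite -ltnNge.
  have -> : Ppure (mkCMI C' Q2) = pD (I2 Q2) Q2 by rewrite /Ppure Ipure_eq Hsz.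
  case: ifP => [/andP [_ Hs1]|_] //.
  rewrite (small g'0) ?(small g'0 (s:=pD I [::])) //.
  exact: leq_trans (size_pD _ _) Hs1.
rewrite KV /Rcmi -/I -/D -/T -/C'.
have HT1 : (size T <= 1)%N -> vg (Gh h C') T = 0 by move=> H; exact: small.
case: ifP => [/eqP HD|HD]; case: ifP => HTs /=.
- rewrite HD g'0; split => // _; last by split => //; exact: HT1.
  by rewrite /vg /= bigcup_nil /Gh set0U; lra.
- rewrite HD g'0 (vg_ext _ E''); split; [by case | by split].
- rewrite (vg_ext _ E'') (JJ g'0 g'm g's) (small g'0 (s:=[::])) //.
  split; case=> ? ?; split => //; exact: HT1.
- by rewrite (vg_ext _ E'') (JJ g'0 g'm g's).
Qed.

End Glue.


Section Final.
Variable n : nat.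

Lemma ND (K' : cmi n) : ~ degenerate K' -> (2 <= size (pD (cmi_C K') (cmi_Qs K')))%N.
Proof.
move=> HK'; rewrite leqNgt; apply/negP => H; apply: HK' => q X _.
apply/valid_vg; apply: small_valid; by rewrite -ltnS.
Qed.

Lemma notimp (K K2 : cmi n) :
  ~~ (cmi_C K \subset cmi_C K2) ->
  (2 <= count (fun Q : {set 'I_n} => ~~ (Q \subset cmi_C K2)) (cmi_Qs K2))%N ->
  ~ cmi_implies K K2.
Proof.
move=> HC Hc Himp.
have [H1 H2] := construct (cmi_Qs K) HC Hc.
apply: H2; apply/valid_vg; apply: Himp; [exact: qc_adm | exact/valid_vg].
Qed.

Lemma count_all (a : pred {set 'I_n}) s : (forall x, x \in s -> a x) -> count a s = size s.
Proof. move=> H; rewrite -count_predT; apply: eq_in_count => x /H ->; by []. Qed.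

Lemma NDR (K K' : cmi n) : Rcmi K K' <> cmi_deg n ->
  cmi_C (Rcmi K K') = cmi_C K' :\: IK K /\
  (2 <= count (fun Q : {set 'I_n} => ~~ (Q \subset cmi_C (Rcmi K K'))) (cmi_Qs (Rcmi K K')))%N.
Proof.
set I := IK K; set C' := cmi_C K'.
have HG : forall P i, P \in genP K' -> i \in P -> i \notin C'.
  move=> P i; rewrite /genP; case: ifP => // _; case: ifP => // _.
  rewrite /Ppure => /pD_sub [Q HQ HPQ] Hi.
  apply: (pD_disj HQ); exact: (subsetP HPQ).
have HT : forall P, P \in [seq P :\: I | P <- genP K' & P :\: I != set0] -> ~~ (P \subset C' :\: I).
  move=> P /mem_pD [P0 HP0 [-> Hne]].
  have [i Hi] := set0Pn _ Hne; apply/subsetPn; exists i => //.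
  rewrite inE negb_and; apply/orP; right; apply: (HG P0) => //.
  by move: Hi; rewrite inE => /andP [].
have HD : IK K' :\: I != set0 -> ~~ (IK K' :\: I \subset C' :\: I).
  move=> Hne; have [i Hi] := set0Pn _ Hne; apply/subsetPn; exists i => //.
  rewrite inE negb_and; apply/orP; right; apply: IK_disj.
  by move: Hi; rewrite inE => /andP [].
rewrite /Rcmi -/I -/C'.
case: ifP => HD0; case: ifP => HTs //= _; split => //.
- rewrite count_all ?ltnNge ?HTs // => x Hx; exact: HT.
- by rewrite (HD (negbT HD0)).
- rewrite (HD (negbT HD0)) /= add1n add1n ltnS ltnS; exact: leq0n.
Qed.

End Final.

Theorem mainTheorem17 (n : nat) (K K' : cmi n) :
  ~ degenerate K -> ~ degenerate K' ->
  (Rcmi K K' = cmi_deg n ->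
     (cmi_implies K K' <-> cmi_C K \subset cmi_C K')) /\
  (Rcmi K K' <> cmi_deg n ->
     (cmi_implies K K' <-> cmi_implies K (Rcmi K K'))).
Proof.
move=> _ HK'.
have Hsz := ND HK'.
have Hc : (2 <= count (fun Q : {set 'I_n} => ~~ (Q \subset cmi_C K')) (cmi_Qs K'))%N.
  by rewrite -size_pD_count.
have GLq : forall q X, admissible q X -> valid q X K -> cmi_C K \subset cmi_C K' ->
    (valid q X K' <-> valid q X (Rcmi K K')).
  move=> q X [Hq Hfin] HV HC; rewrite !valid_vg.
  apply: (GL (h_mono Hq Hfin) (h_sub Hq Hfin)) => //; exact/valid_vg.
split.
  move=> HR; split.
    move=> Himp; apply/negPn/negP => HC; exact: (notimp HC Hc Himp).
  move=> HC q X Had HV; apply/(GLq q X Had HV HC).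
  rewrite HR valid_vg; apply: small; [exact: Gh0 | by []].
move=> HR; case: (boolP (cmi_C K \subset cmi_C K')) => HC.
  split => Himp q X Had HV; apply/(GLq q X Had HV HC); exact: Himp.
have [EC Hc2] := NDR HR.
split => Himp; exfalso.
  exact: (notimp HC Hc Himp).
apply: (notimp _ Hc2 Himp); rewrite EC; apply/negP => H; move/negP: HC; apply.
exact: subset_trans H (subsetDl _ _).
Qed.
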